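(* Let $\Lambda_1,\Lambda_2,\Lambda_3,\Lambda_4\subset\mathbb{R}^3$ be the lattices spanned over $\mathbb{Z}$ by the rows of, respectively, $$\begin{bmatrix}2&1&1\\1&2&-1\\-2&2&2\end{bmatrix},\ \begin{bmatrix}1&2&1\\-1&1&2\\2&-2&2\end{bmatrix},\ \begin{bmatrix}1&1&2\\2&-1&1\\2&2&-2\end{bmatrix},\ \begin{bmatrix}2&-1&-1\\-1&2&-1\\2&2&2\end{bmatrix}.$$ Each $\Lambda_i$ is congruent to $\sqrt3A_2\oplus\sqrt{12}\,\mathbb{Z}$, and $\Lambda_1\cap\Lambda_2\cap\Lambda_3\cap\Lambda_4$ is the face-centered cubic lattice spanned by $(3,3,0)$, $(3,-3,0)$, $(0,3,-3)$.
   Context: A lattice is spanned by the rows of a matrix if it is the set of all integer linear combinations of those rows. $A_2$ denotes the planar hexagonal lattice with minimal norm $2$ (norm = squared length), so that $\sqrt3A_2\oplus\sqrt{12}\,\mathbb{Z}$ has Gram matrix $\begin{bmatrix}6&-3&0\\-3&6&0\\0&0&12\end{bmatrix}$. Two lattices are congruent if one is mapped to the other by an element of $SO(3)$. *)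

(* Defs.v *)
From HB Require Import structures.
From mathcomp Require Import all_boot all_order all_algebra.
Set Implicit Arguments. Unset Strict Implicit. Unset Printing Implicit Defensive.
Import Order.TTheory GRing.Theory Num.Theory.
Local Open Scope ring_scope.

Definition mx3 (R : ringType) (a b c d e f g h k : R) : 'M[R]_3 :=
  \matrix_(i < 3, j < 3)
    nth 0 (nth [::] [:: [:: a; b; c]; [:: d; e; f]; [:: g; h; k]] i) j.

Definition lattice (R : numDomainType) (B : 'M[R]_3) (v : 'rV[R]_3) : Prop :=
  exists c : 'rV[int]_3, v = map_mx (fun z : int => z%:~R) c *m B.

Definition congruent (R : numDomainType) (L1 L2 : 'rV[R]_3 -> Prop) : Prop :=
  exists Q : 'M[R]_3,
    Q *m Q^T = 1%:M /\ \det Q = 1 /\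
    (forall w, L2 w <-> exists v, L1 v /\ w = v *m Q).

(* A concrete realization of sqrt3 A_2 (+) sqrt12 Z: basis rows
   (sqrt6,0,0), (-sqrt6/2, 3 sqrt2/2, 0), (0,0,sqrt12), whose Gram matrix is
   [[6,-3,0],[-3,6,0],[0,0,12]]. *)
Definition A2Z_basis (R : rcfType) : 'M[R]_3 :=
  mx3 (Num.sqrt 6) 0 0
      (- Num.sqrt 6 / 2) (3 * Num.sqrt 2 / 2) 0
      0 0 (Num.sqrt 12).

Definition sqrt3A2_sqrt12Z (R : rcfType) : 'rV[R]_3 -> Prop :=
  lattice (A2Z_basis R).

Definition intmx3 (R : numDomainType) (a b c d e f g h k : int) : 'M[R]_3 :=
  mx3 a%:~R b%:~R c%:~R d%:~R e%:~R f%:~R g%:~R h%:~R k%:~R.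

Definition Lambda1 (R : numDomainType) := lattice (intmx3 R 2 1 1 1 2 (-1) (-2) 2 2).
Definition Lambda2 (R : numDomainType) := lattice (intmx3 R 1 2 1 (-1) 1 2 2 (-2) 2).
Definition Lambda3 (R : numDomainType) := lattice (intmx3 R 1 1 2 2 (-1) 1 2 2 (-2)).
Definition Lambda4 (R : numDomainType) := lattice (intmx3 R 2 (-1) (-1) (-1) 2 (-1) 2 2 2).
Definition FCC (R : numDomainType) := lattice (intmx3 R 3 3 0 3 (-3) 0 0 3 (-3)).

Arguments Lambda1 R : clear implicits.
Arguments Lambda2 R : clear implicits.
Arguments Lambda3 R : clear implicits.
Arguments Lambda4 R : clear implicits.
Arguments FCC R : clear implicits.
Arguments sqrt3A2_sqrt12Z R : clear implicits.
Arguments A2Z_basis R : clear implicits.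

(* Main.v *)
Require Import Defs.
From mathcomp Require Import all_boot all_order all_algebra.
From mathcomp Require Import ring lra.
Import GRing.Theory Num.Theory.
Local Open Scope ring_scope.

Lemma det_mx3 (R : comNzRingType) (a b c d e f g h k : R) :
  \det (mx3 a b c d e f g h k) = a * (e * k - f * h) - b * (d * k - f * g) + c * (d * h - e * g).
Proof.
rewrite (expand_det_row _ ord0) !big_ord_recr big_ord0 /cofactor /=.
rewrite !(expand_det_row _ ord0) !big_ord_recr !big_ord0 /cofactor /= !det_mx11 !mxE /=.
ring.
Qed.

Lemma map_imx (R : numDomainType) (a b c d e f g h k : int) :
  map_mx (fun z : int => z%:~R) (mx3 a b c d e f g h k) = intmx3 R a b c d e f g h k.
Proof.
apply/matrixP => i j; rewrite !mxE.
by case: i => [[|[|[|//]]] ?]; case: j => [[|[|[|//]]] ?].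
Qed.

Ltac mxtac := apply/matrixP => -[[|[|[|//]]] ?] -[[|[|[|//]]] ?];
  rewrite ?(mxE, big_ord_recr, big_ord0) /=.


Section A.
Variable R : rcfType.

Lemma sqq (x : R) : 0 <= x -> Num.sqrt x * Num.sqrt x = x.
Proof. by move=> h; rewrite -expr2 sqr_sqrtr. Qed.

Definition G : 'M[R]_3 := intmx3 R 6 (-3) 0 (-3) 6 0 0 0 12.

Lemma AAT : A2Z_basis R *m (A2Z_basis R)^T = G.
Proof.
have h6 := @sqq 6 ltac:(by []). have h2 := @sqq 2 ltac:(by []).
have h12 := @sqq 12 ltac:(by []).
rewrite /A2Z_basis /G; mxtac; nra.
Qed.

Lemma detA : \det (A2Z_basis R) = 18.
Proof.
have h : Num.sqrt 6 * Num.sqrt 2 * Num.sqrt 12 = 12 :> R.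
  rewrite -sqrtrM // (_ : 6 * 2 = 12 :> R); last by ring.
  by rewrite sqq.
rewrite /A2Z_basis det_mx3. lra.
Qed.

Lemma congr_gen (B : 'M[R]_3) (Uz : 'M[int]_3) :
  Uz *m Uz = 1%:M -> \det B = 18 -> \det (map_mx (fun z : int => z%:~R) Uz : 'M[R]_3) = 1 ->
  B *m B^T = map_mx (fun z : int => z%:~R) Uz *m G *m (map_mx (fun z : int => z%:~R) Uz)^T ->
  congruent (lattice B) (sqrt3A2_sqrt12Z R).
Proof.
set U := map_mx _ Uz => hU dB dU hG.
have Bu : B \in unitmx by rewrite unitmxE dB unitfE pnatr_eq0.
set A := A2Z_basis R.
exists (invmx B *m (U *m A)); split; [|split].
- rewrite trmx_mul (trmx_mul U A).
  have -> : invmx B *m (U *m A) *m ((A^T *m U^T) *m (invmx B)^T) =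
     invmx B *m (U *m (A *m A^T) *m U^T) *m (invmx B)^T by rewrite !mulmxA.
  rewrite AAT -hG mulmxA mulVmx // -mulmxA mul1mx -trmx_mul mulVmx // trmx1. by [].
- by rewrite !det_mulmx det_inv dB dU detA mul1r mulVf // pnatr_eq0.
- move=> w; split.
  + case=> d ->; exists (map_mx (fun z : int => z%:~R) (d *m Uz) *m B); split.
      by exists (d *m Uz).
    rewrite mulmxA -(mulmxA _ B) mulmxV // mulmx1 mulmxA -!map_mxM -mulmxA hU mulmx1 //.
  + case=> v [[c ->] ->]; exists (c *m Uz).
    by rewrite map_mxM -(mulmxA _ B) (mulmxA B) mulmxV // mul1mx mulmxA.
Qed.
End A.

Definition mapz (R : rcfType) (M : 'M[int]_3) : 'M[R]_3 := map_mx (fun z : int => z%:~R) M.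

Lemma congr_inst (R : rcfType) (s : int) (a b c d e f g h k : int) :
  s * s = 1 ->
  \det (intmx3 R a b c d e f g h k) = 18 ->
  intmx3 R a b c d e f g h k *m (intmx3 R a b c d e f g h k)^T =
    mapz R (mx3 1 0 0 0 s 0 0 0 s) *m G R *m (mapz R (mx3 1 0 0 0 s 0 0 0 s))^T ->
  congruent (lattice (intmx3 R a b c d e f g h k)) (sqrt3A2_sqrt12Z R).
Proof.
move=> hs dB hG; apply: (@congr_gen R _ (mx3 1 0 0 0 s 0 0 0 s)) => //.
- apply/matrixP => -[[|[|[|//]]] ?] -[[|[|[|//]]] ?];
  rewrite ?mxE ?big_ord_recr ?big_ord0 ?mxE /= ?hs; ring.
- rewrite det_map_mx det_mx3 !(mul0r, mulr0, subr0, sub0r, mul1r, addr0, oppr0) hs.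
  by [].
Qed.

Lemma sub_lat (R : rcfType) (F B : 'M[R]_3) (M : 'M[int]_3) v :
  F = mapz R M *m B -> lattice F v -> lattice B v.
Proof. by move=> hF [c ->]; exists (c *m M); rewrite hF map_mxM mulmxA. Qed.

Lemma inter_lat (R : rcfType) (F B1 B2 K1 K2 : 'M[R]_3) (N1 N2 : 'M[int]_3) v :
  mapz R N1 *m F = B1 *m K1 -> mapz R N2 *m F = B2 *m K2 -> K1 + K2 = 1%:M ->
  lattice B1 v -> lattice B2 v -> lattice F v.
Proof.
move=> h1 h2 hK [c1 e1] [c2 e2]; exists (c1 *m N1 + c2 *m N2).
rewrite map_mxD !map_mxM mulmxDl -!mulmxA.
rewrite /mapz in h1 h2; rewrite h1 h2 !mulmxA -e1 -e2 -mulmxDr hK mulmx1 //.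
Qed.

Theorem mainTheorem4 (R : rcfType) :
  congruent (Lambda1 R) (sqrt3A2_sqrt12Z R) /\
  congruent (Lambda2 R) (sqrt3A2_sqrt12Z R) /\
  congruent (Lambda3 R) (sqrt3A2_sqrt12Z R) /\
  congruent (Lambda4 R) (sqrt3A2_sqrt12Z R) /\
  (forall v : 'rV[R]_3,
     (Lambda1 R v /\ Lambda2 R v /\ Lambda3 R v /\ Lambda4 R v) <-> FCC R v).
Proof.
split; [apply: (@congr_inst R (-1))|split; [apply: (@congr_inst R (-1))|
  split; [apply: (@congr_inst R (-1))|split; [apply: (@congr_inst R (1))|]]]];
  rewrite ?det_mx3 ?/mapz ?map_imx /G //; try (by ring); try (by mxtac; ring).
move=> v; split.
- case=> h1 [h2 _].
  apply: (@inter_lat R _ _ _ (intmx3 R (-1) (-1) (-1) 0 1 0 2 1 2) (intmx3 R 2 1 1 0 0 0 (-2) (-1) (-1))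
     (mx3 0 0 0 (-1) 0 1 3 (-1) (-2)) (mx3 0 0 0 (-2) 0 1 0 0 0) v _ _ _ h1 h2);
  rewrite ?/mapz ?map_imx; mxtac; ring.
- move=> hv; split; [|split; [|split]].
  + apply: (@sub_lat R _ _ (mx3 1 1 0 1 (-1) (-1) (-1) 2 0) v _ hv); rewrite /mapz map_imx; mxtac; ring.
  + apply: (@sub_lat R _ _ (mx3 2 (-1) 0 0 (-1) 1 1 (-1) (-1)) v _ hv); rewrite /mapz map_imx; mxtac; ring.
  + apply: (@sub_lat R _ _ (mx3 1 0 1 (-1) 2 0 0 (-1) 1) v _ hv); rewrite /mapz map_imx; mxtac; ring.
  + apply: (@sub_lat R _ _ (mx3 1 1 1 1 (-1) 0 1 2 0) v _ hv); rewrite /mapz map_imx; mxtac; ring.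
Qed.
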